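(* Let $f$ be a nonnegative integer-valued function on $V(G)$. Every graph $G$ that is $t$-iso-tough for $t(v)=f(v)(f(v)+1)$ has an $(f,f+1)$-factor.
   Context: Graphs are finite, have no loops, but may have multiple edges; degrees count multiplicities. For $S\subseteq V(G)$, $G\setminus S$ is the graph obtained by deleting $S$ and $I(G\setminus S)$ is its set of isolated vertices. For a real function $t$ on $V(G)$, $G$ is $t$-iso-tough if $\sum_{v\in I(G\setminus S)}t(v)\le |S|$ for all $S\subseteq V(G)$. An $(f,f+1)$-factor is a spanning subgraph $F$ with $f(v)\le d_F(v)\le f(v)+1$ for all $v$. *)

(* Defs.v *)
From mathcomp Require Import all_boot.
Set Implicit Arguments. Unset Strict Implicit. Unset Printing Implicit Defensive.

(* A finite loopless multigraph on vertex set T, given by its edge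
   multiplicity function: m u v = number of edges between u and v. *)
Record multigraph (T : finType) := Multigraph {
  mult : T -> T -> nat;
  mult_sym : forall u v, mult u v = mult v u;
  mult_loopless : forall v, mult v v = 0
}.

Definition deg (T : finType) (m : T -> T -> nat) (v : T) : nat :=
  \sum_(u : T) m v u.

Definition iso_after (T : finType) (G : multigraph T) (S : {set T}) : {set T} :=
  [set v | (v \notin S) && [forall u, (u \notin S) ==> (mult G v u == 0)]].

Definition iso_tough (T : finType) (G : multigraph T) (t : T -> nat) : Prop :=
  forall S : {set T}, \sum_(v in iso_after G S) t v <= #|S|.

Definition is_ff1_factor (T : finType) (G : multigraph T) (f : T -> nat)
    (F : T -> T -> nat) : Prop :=
  (forall u v, F u v = F v u) /\
  (forall u v, F u v <= mult G u v) /\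
  (forall v, f v <= deg F v <= f v + 1).

(* Main.v *)
Require Import Defs.
From mathcomp Require Import all_boot.
From mathcomp Require Import all_order all_algebra zify ring lra.
Set Implicit Arguments. Unset Strict Implicit. Unset Printing Implicit Defensive.
Import Order.TTheory GRing.Theory Num.Theory.

Section S1.
Variables (T : finType) (G : multigraph T) (f : T -> nat).
Local Notation m := (mult G).

Definition dS (S : {set T}) x := \sum_(u in ~: S) m x u.

Lemma sum_sub (A B : {set T}) (F : T -> nat) : A \subset B ->
  \sum_(x in A) F x <= \sum_(x in B) F x.
Proof.
move=> sAB; rewrite [X in _ <= X](big_setID A) /=.
by rewrite (setIidPr sAB) leq_addr.
Qed.

Lemma greedy (S : {set T}) : forall A : {set T}, (forall x, x \in A -> x \notin S) ->
  exists I : {set T},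
  [/\ I \subset A, (forall x y, x \in I -> y \in I -> m x y = 0) &
   \sum_(x in A) f x + \sum_(x in I) dS S x <=
   \sum_(x in I) f x * (f x + 1) + \sum_(x in A) dS S x].
Proof.
move=> A; have [n] := ubnP #|A|; elim: n A => // n IH A hn hAS.
case: (set_0Vmem A) => [->|[a ha]].
  exists set0; split; first by rewrite sub0set.
    by move=> x y; rewrite inE.
  by rewrite !big_set0.
have [x hx hmax] : exists2 x, x \in A & forall y, y \in A -> f y <= f x.
  by case: (arg_maxnP f ha) => z hz H; exists z.
case: (leqP (f x) (dS S x)) => hfx.
  have h1 : #|A :\ x| < n by move: hn; rewrite (cardsD1 x A) hx.
  have h2 : forall y, y \in A :\ x -> y \notin S.
    by move=> y; rewrite inE => /andP[_ /hAS].
  have [I [hI hind hsum]] := IH (A :\ x) h1 h2.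
  exists I; split => //.
    by apply: subset_trans hI (subsetDl A [set x]).
  by rewrite (big_setD1 x hx) /= (big_setD1 x hx) /=; lia.
set B := [set u | 0 < m x u].
have h1 : #|(A :\ x) :\: B| < n.
  apply: leq_ltn_trans (subset_leq_card (subsetDl _ _)) _.
  by move: hn; rewrite (cardsD1 x A) hx.
have h2 : forall y, y \in (A :\ x) :\: B -> y \notin S.
  by move=> y; rewrite !inE => /and3P[_ _ /hAS].
have [I [hI hind hsum]] := IH _ h1 h2.
have xS : x \notin S by apply: hAS.
have xI : x \notin I.
  by apply/negP => /(subsetP hI); rewrite !inE eqxx andbF.
exists (x |: I); split.
- rewrite subUset sub1set hx /=.
  by apply: subset_trans hI (subset_trans (subsetDl _ _) (subsetDl _ _)).
- have hxy : forall y, y \in I -> m x y = 0.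
    move=> y /(subsetP hI); rewrite !inE => /andP[]; case: (m x y) => //.
  move=> y z; rewrite !inE => /orP[/eqP->|hy] /orP[/eqP->|hz].
  + exact: mult_loopless.
  + exact: hxy.
  + by rewrite mult_sym; apply: hxy.
  + exact: hind.
- set N := (A :\ x) :&: B.
  have hN1 : \sum_(u in N) f u <= #|N| * f x.
    rewrite -sum1_card big_distrl /=; apply: leq_sum => u.
    by rewrite !inE mul1n => /andP[/andP[_ /hmax]].
  have hN2 : #|N| <= dS S x.
    rewrite -sum1_card /dS.
    apply: (@leq_trans (\sum_(u in N) m x u)).
      by apply: leq_sum => u; rewrite !inE => /andP[_ ->].
    apply: sum_sub; apply/subsetP => u; rewrite !inE => /andP[/andP[_ /hAS ->]].
    done.
  rewrite !big_setU1 //= (big_setD1 x hx) /= (big_setD1 x hx) /=.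
  rewrite (@big_setID _ _ _ _ (A :\ x) B) /= [X in _ <= _ + (_ + X)](@big_setID _ _ _ _ (A :\ x) B) /=.
  rewrite -/N.
  move: hsum hN1 hN2 hfx.
  set a1 := \sum_(i in N) f i.
  set a2 := \sum_(i in _ :\: B) f i.
  set a3 := \sum_(i in N) dS S i.
  set a4 := \sum_(i in _ :\: B) dS S i.
  set b1 := \sum_(i in I) dS S i.
  set b2 := \sum_(i in I) _.
  move=> *; nia.
Qed.

Lemma stuck_false (tough : iso_tough G (fun v => f v * (f v + 1)))
  (S T0 : {set T}) :
  (forall x, x \in T0 -> x \notin S) ->
  #|S| + \sum_(x in T0) dS S x < \sum_(x in T0) f x -> False.
Proof.
move=> hdisj hlt.
have [I [hI hind hsum]] := @greedy S T0 hdisj.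
set NI := [set u | (u \notin S) && [exists x in I, 0 < m x u]].
have ht := tough (S :|: NI).
have hiso : I \subset iso_after G (S :|: NI).
  apply/subsetP => x xI; rewrite inE; apply/andP; split.
    rewrite !inE negb_or (hdisj x (subsetP hI x xI)) /=.
    apply/negP => /existsP[y /andP[yI]].
    by rewrite (hind y x yI xI).
  apply/forallP => u; apply/implyP; rewrite !inE negb_or => /andP[uS uN].
  apply/negPn/negP => hm; move/negP: uN; apply; rewrite uS /=.
  by apply/existsP; exists x; rewrite xI lt0n hm.
have h1 : \sum_(x in I) f x * (f x + 1) <= #|S :|: NI|.
  exact: leq_trans (@sum_sub _ _ (fun x => f x * (f x + 1)) hiso) ht.
have h2 : #|S :|: NI| <= #|S| + #|NI| by rewrite cardsU; lia.
have h3 : #|NI| <= \sum_(x in I) dS S x.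
  rewrite -sum1_card.
  apply: (@leq_trans (\sum_(u in NI) \sum_(x in I) m x u)).
    apply: leq_sum => u; rewrite inE => /andP[_ /existsP[x /andP[xI hm]]].
    by rewrite (bigD1 x xI) /=; lia.
  apply: (@leq_trans (\sum_(u in ~: S) \sum_(x in I) m x u)).
    by apply: sum_sub; apply/subsetP => u; rewrite !inE => /andP[-> _].
  by rewrite exchange_big.
lia.
Qed.

Definition valid (F : T -> T -> nat) :=
  [/\ (forall a b, F a b = F b a), (forall a b, F a b <= m a b) &
      (forall v, deg F v <= f v + 1)].

Definition stepr (F : T -> T -> nat) (s t : T * bool) : bool :=
  if s.2 then ~~ t.2 && (deg F s.1 == (f s.1).+1) && (0 < F s.1 t.1)
  else t.2 && (deg F s.1 <= f s.1) && (F s.1 t.1 < m s.1 t.1).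

Definition good (F : T -> T -> nat) (s : T * bool) : bool :=
  if s.2 then deg F s.1 <= f s.1 else deg F s.1 == (f s.1).+1.

Lemma stuck_count F v0 : valid F -> deg F v0 < f v0 ->
  (forall s, connect (stepr F) (v0, false) s -> ~~ good F s) ->
  exists S T0 : {set T}, (forall x, x \in T0 -> x \notin S) /\
    #|S| + \sum_(x in T0) dS S x < \sum_(x in T0) f x.
Proof.
move=> [Fsym Fm Fd] hv0 hng.
set s0 := (v0, false).
set Out := [set x | connect (stepr F) s0 (x, false)].
set In := [set x | connect (stepr F) s0 (x, true)].
have hOut : forall x, x \in Out -> deg F x <= f x.
  move=> x; rewrite inE => /hng; rewrite /good /= => /eqP h.
  by have := Fd x; lia.
have hIn : forall x, x \in In -> deg F x = f x + 1.
  move=> x; rewrite inE => /hng; rewrite /good /= -ltnNge => h.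
  by have := Fd x; lia.
have hdisj : forall x, x \in Out -> x \notin In.
  move=> x /hOut h; apply/negP => /hIn; lia.
have hd : forall x u, x \in Out -> u \notin In -> F x u = m x u.
  move=> x u hx hu; apply/eqP; rewrite eqn_leq Fm /= leqNgt; apply/negP => hlt.
  move/negP: hu; apply; move: hx; rewrite !inE => hx.
  apply: (connect_trans hx); apply: connect1; rewrite /stepr /= hlt andbT.
  by apply: hOut; rewrite inE.
have he : forall y u, y \in In -> u \notin Out -> F y u = 0.
  move=> y u hy hu; apply/eqP; rewrite -leqn0 leqNgt; apply/negP => hlt.
  move/negP: hu; apply; move: hy; rewrite !inE => hy.
  apply: (connect_trans hy); apply: connect1; rewrite /stepr /= hlt andbT.
  by apply/eqP; rewrite (hIn y) ?addn1 // inE.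
exists In, Out; split; first by move=> x /hdisj.
have c1 : \sum_(y in In) deg F y = \sum_(y in In) \sum_(u in Out) F y u.
  apply: eq_bigr => y hy; rewrite /deg (bigID (fun u => u \in Out)) /=.
  by rewrite [X in _ + X]big1 ?addn0 // => u hu; apply: he.
have c2 : \sum_(x in Out) deg F x =
    \sum_(x in Out) \sum_(u in In) F x u + \sum_(x in Out) dS In x.
  rewrite -big_split /=; apply: eq_bigr => x hx.
  rewrite /deg (bigID (fun u => u \in In)) /= /dS; congr (_ + _).
  apply: eq_big => [u|u hu]; first by rewrite !inE.
  by apply: hd.
have c3 : \sum_(y in In) \sum_(u in Out) F y u =
    \sum_(x in Out) \sum_(u in In) F x u.
  by rewrite exchange_big /=; apply: eq_bigr => x _; apply: eq_bigr => y _.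
have c4 : #|In| <= \sum_(y in In) deg F y.
  by rewrite -sum1_card; apply: leq_sum => y /hIn ->; rewrite addn1.
have c5 : \sum_(x in Out) deg F x < \sum_(x in Out) f x.
  have v0O : v0 \in Out by rewrite inE connect0.
  rewrite (bigD1 v0 v0O) [X in _ < X](bigD1 v0 v0O) /=.
  rewrite -addSn; apply: leq_add => //.
  by apply: leq_sum => x /andP[hx _]; apply: hOut.
lia.
Qed.
End S1.

Lemma sumz (I : finType) (F : I -> nat) :
  Posz (\sum_i F i) = (\sum_i Posz (F i))%R.
Proof. by apply: (big_morph Posz PoszD). Qed.

Lemma tele (g : nat -> int) n :
  (\sum_(i < n) (-1)^+i * (g i + g i.+1) = g 0%N - (-1)^+n * g n)%R.
Proof.
elim: n => [|n IH]; first by rewrite big_ord0 expr0 mul1r subrr.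
rewrite big_ord_recr /= IH exprS; ring.
Qed.

Lemma sum_eq1 (T : finType) (x : T) : \sum_(b : T) (x == b) = 1%N.
Proof.
rewrite (bigD1 x) //= eqxx big1 // => b; rewrite eq_sym => /negbTE -> //.
Qed.

Section S2.
Variables (T : finType) (G : multigraph T) (f : T -> nat).
Local Notation m := (mult G).

Definition defi (F : T -> T -> nat) := \sum_v (f v - deg F v).

Lemma flip F v0 k (pv : nat -> T) :
  valid G f F -> deg F v0 < f v0 -> pv 0 = v0 ->
  (forall i, i < k -> if odd i then
      deg F (pv i) = f (pv i) + 1 /\ 0 < F (pv i) (pv i.+1)
    else deg F (pv i) <= f (pv i) /\ F (pv i) (pv i.+1) < m (pv i) (pv i.+1)) ->
  (if odd k then deg F (pv k) <= f (pv k) else deg F (pv k) == f (pv k) + 1) ->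
  (forall i j, i < j <= k -> odd i = odd j -> pv i != pv j) ->
  exists F', valid G f F' /\ defi F' < defi F.
Proof.
move=> [Fsym Fm Fd] hv0 h0 hsrc hend huniq.
have nl : forall i, i < k -> pv i != pv i.+1.
  move=> i hi; move: (hsrc i hi); case: (odd i) => -[_ h]; apply/eqP => e;
  move: h; rewrite e; have := Fm (pv i.+1) (pv i.+1); rewrite mult_loopless; lia.
have dsrc : forall i j, i < j -> j < k -> pv i != pv j.
  move=> i j hij hjk; case eo: (odd i == odd j).
    by apply: huniq; [apply/andP; split => //; apply: ltnW | apply/eqP].
  apply/eqP => e; have := hsrc i (ltn_trans hij hjk); have := hsrc j hjk.
  rewrite e; move: eo; case: (odd i); case: (odd j) => //= _; lia.
pose tw i a b := (((pv i == a) && (pv i.+1 == b)) + ((pv i == b) && (pv i.+1 == a)))%N.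
have twP : forall i a b, 0 < tw i a b ->
    (pv i = a /\ pv i.+1 = b) \/ (pv i = b /\ pv i.+1 = a).
  move=> i a b; rewrite /tw.
  case h1: ((pv i == a) && (pv i.+1 == b)).
    by move/andP: h1 => [/eqP e1 /eqP e2]; left.
  case h2: ((pv i == b) && (pv i.+1 == a)) => //= _.
  by move/andP: h2 => [/eqP e1 /eqP e2]; right.
have tuniq : forall i j a b, i < j -> j < k -> 0 < tw i a b -> 0 < tw j a b -> False.
  move=> i j a b hij hjk /twP hi /twP hj.
  have cross : pv i.+1 = pv j -> pv i = pv j.+1 -> False.
    move=> e1 e2; case: (ltngtP i.+1 j) => hh.
    - by move/eqP: e1; apply/negP; apply: dsrc.
    - lia.
    - subst j; move/eqP: e2; apply/negP; apply: huniq => //=.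
        by apply/andP; split => //; lia.
      by rewrite negbK.
  case: hi => -[e1 e2]; case: hj => -[e3 e4].
  - by move/eqP: (dsrc i j hij hjk); rewrite e1 e3.
  - by apply: cross; congruence.
  - by apply: cross; congruence.
  - by move/eqP: (dsrc i j hij hjk); rewrite e1 e3.
have tw1 : forall i a b, i < k -> tw i a b <= 1.
  move=> i a b hi; rewrite /tw.
  case h1: ((pv i == a) && (pv i.+1 == b)); case h2: ((pv i == b) && (pv i.+1 == a)) => //.
  move/andP: h1 => [/eqP e1 /eqP e2]; move/andP: h2 => [_ /eqP e4].
  by move: (nl i hi); rewrite e1 e4 eqxx.
pose dl a b : int := (\sum_(i < k) (-1)^+i * Posz (tw i a b))%R.
have bnd : forall a b, (0 <= Posz (F a b) + dl a b <= Posz (m a b))%R.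
  move=> a b; case: (pickP (fun i : 'I_k => 0 < tw i a b)) => [i0 hi0 | hno].
    have tw0 : forall i : 'I_k, i != i0 -> tw i a b = 0.
      move=> i hne; apply/eqP; rewrite -leqn0 leqNgt; apply/negP => hi.
      case: (ltngtP i i0) => hh.
      - exact: (tuniq i i0 a b hh (ltn_ord i0) hi hi0).
      - exact: (tuniq i0 i a b hh (ltn_ord i) hi0 hi).
      - by move: hne; rewrite -(inj_eq val_inj) /= hh eqxx.
    have e1 : tw i0 a b = 1 by have := tw1 i0 a b (ltn_ord i0); lia.
    have -> : dl a b = ((-1)^+i0)%R.
      rewrite /dl (bigD1 i0) //= big1 ?addr0; first by rewrite e1 mulr1.
      by move=> i /tw0 ->; rewrite mulr0.
    have hs := hsrc i0 (ltn_ord i0).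
    rewrite -signr_odd; move: hs; case: (odd i0) => -[_ h].
      have hF : 0 < F a b.
        by case: (twP i0 a b hi0) => -[<- <-] //; rewrite Fsym.
      rewrite expr1; have := Fm a b; lia.
    have hF : F a b < m a b.
      by case: (twP i0 a b hi0) => -[<- <-] //; rewrite Fsym mult_sym.
    rewrite expr0; lia.
  have -> : dl a b = 0%R.
    rewrite /dl big1 // => i _; have := hno i; rewrite /= lt0n => /negbFE/eqP ->.
    by rewrite mulr0.
  rewrite addr0; have := Fm a b; lia.
pose F' a b := absz (Posz (F a b) + dl a b)%R.
have F'z : forall a b, Posz (F' a b) = (Posz (F a b) + dl a b)%R.
  by move=> a b; rewrite /F' gez0_abs //; case/andP: (bnd a b).
have twS : forall i a b, tw i a b = tw i b a by move=> i a b; rewrite /tw addnC.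
have F'sym : forall a b, F' a b = F' b a.
  by move=> a b; rewrite /F' /dl Fsym; congr absz; congr (_ + _)%R;
     apply: eq_bigr => i _; rewrite twS.
have F'm : forall a b, F' a b <= m a b.
  by move=> a b; have := bnd a b; have := F'z a b; lia.
have sumtw : forall i v, \sum_u tw i v u = ((pv i == v) + (pv i.+1 == v))%N.
  move=> i v; rewrite /tw big_split /=; congr (_ + _).
    by under eq_bigr do rewrite -mulnb; rewrite -big_distrr /= sum_eq1 muln1.
  under eq_bigr do rewrite andbC -mulnb; rewrite -big_distrr /= sum_eq1 muln1.
  by [].
have degF' : forall v, Posz (deg F' v) =
    (Posz (deg F v) + Posz (pv 0 == v) - (-1)^+k * Posz (pv k == v))%R.
  move=> v; rewrite /deg sumz (eq_bigr _ (fun u _ => F'z v u)) big_split /=.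
  rewrite -sumz -addrA; congr (_ + _)%R.
  rewrite /dl exchange_big /=.
  under eq_bigr do rewrite -mulr_sumr -sumz sumtw PoszD.
  by rewrite (tele (fun i => Posz (pv i == v))).
have key : forall v, [/\ deg F' v <= f v + 1,
    f v - deg F' v <= f v - deg F v & (v = v0 -> deg F v < deg F' v)].
  move=> v; have := degF' v; have := Fd v; rewrite h0 -signr_odd.
  have hv0' : v0 = v -> deg F v < f v by move=> <-.
  move: hend; case: (odd k) => /= hk; rewrite ?expr1 ?expr0.
    have hk' : pv k = v -> deg F v <= f v by move=> <-.
    case: (v0 =P v) => e1; case: (pv k =P v) => e2 /= Fdv H.
    - by move: (hv0' e1) (hk' e2) => *; split; lia.
    - by move: (hv0' e1) => *; split; lia.
    - by move: (hk' e2) => *; split; [lia | lia | move=> e; case: e1].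
    - by split; [lia | lia | move=> e; case: e1].
  have hk' : pv k = v -> deg F v = f v + 1 by move=> <-; apply/eqP.
  case: (v0 =P v) => e1; case: (pv k =P v) => e2 /= Fdv H.
  - by move: (hv0' e1) (hk' e2) => *; lia.
  - by move: (hv0' e1) => *; split; lia.
  - by move: (hk' e2) => *; split; [lia | lia | move=> e; case: e1].
  - by split; [lia | lia | move=> e; case: e1].
exists F'; split.
  split => // v; by case: (key v).
rewrite /defi (bigD1 v0) //= [X in _ < X](bigD1 v0) //=.
rewrite -addSn; apply: leq_add.
  by case: (key v0) => _ _ /(_ erefl); lia.
by apply: leq_sum => v _; case: (key v).
Qed.
End S2.

Section S3.
Variables (T : finType) (G : multigraph T) (f : T -> nat).
Local Notation m := (mult G).

Lemma stepr_par F (s t : T * bool) : stepr G f F s t -> t.2 = ~~ s.2.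
Proof. by case: s => x []; case: t => y [] //=; rewrite /stepr /= => /andP[/andP[]]. Qed.

Lemma augment F v0 : valid G f F -> deg F v0 < f v0 ->
  forall s, connect (stepr G f F) (v0, false) s -> good f F s ->
  exists F', valid G f F' /\ defi f F' < defi f F.
Proof.
move=> vF hv0 s /connectP [p hp ->].
case: (shortenP hp) => p' hp' hu _ hg.
set s0 := (v0, false) in hp' hu hg.
pose st i := nth s0 (s0 :: p') i.
pose pv i := (st i).1.
pose k := size p'.
move/(pathP s0): (hp') => hstep.
have par : forall i, i <= k -> (st i).2 = odd i.
  elim=> [|i IH] hi; first by [].
  have := hstep i hi; move/stepr_par => ->.
  by rewrite (IH (ltnW hi)).
apply: (@flip T G f F v0 k pv vF hv0 erefl).
- move=> i hi; have := hstep i hi; have := par i (ltnW hi).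
  rewrite /stepr /pv -/(st i) -/(st i.+1).
  case: (st i) => x b /= ->; case: (odd i) => /=.
    by move=> /andP[/andP[_ /eqP ->] ->]; rewrite addn1.
  by move=> /andP[/andP[_ ->] ->].
- move: hg; rewrite (last_nth s0) -/(st k) /good /pv.
  have := par k (leqnn k); case: (st k) => x b /= ->.
  by case: (odd k) => //; rewrite addn1.
- move=> i j /andP[hij hjk] hodd; apply/negP => /eqP e.
  have hi : i < size (s0 :: p') by rewrite /= ltnS; apply: ltnW (leq_trans hij hjk).
  have hj : j < size (s0 :: p') by rewrite /= ltnS.
  have H := nth_uniq s0 hi hj hu.
  have : st i == st j.
    rewrite [st i]surjective_pairing [st j]surjective_pairing.
    rewrite (par i (ltnW (leq_trans hij hjk))) (par j hjk) hodd.
    by rewrite -/(pv i) -/(pv j) e.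
  rewrite /st H => /eqP hij'.
  by move: hij; rewrite hij' ltnn.
Qed.
End S3.

Lemma main_step (T : finType) (G : multigraph T) (f : T -> nat) F :
  iso_tough G (fun v => f v * (f v + 1)) -> valid G f F ->
  (exists F' : T -> T -> nat, is_ff1_factor G f F') \/
  (exists F', valid G f F' /\ defi f F' < defi f F).
Proof.
move=> tough vF.
case: (boolP [forall v, f v <= deg F v]) => hall.
  left; exists F; case: vF => Fs Fm Fd; split; [|split] => // v.
  by rewrite (forallP hall v) Fd.
move/forallPn: hall => [v0]; rewrite -ltnNge => hv0.
case: (boolP [exists s, connect (stepr G f F) (v0, false) s && good f F s]).
  move/existsP => [s /andP[hc hg]]; right; have H := augment vF hv0 hc hg; exact: H.
move=> hno.
have hng : forall s, connect (stepr G f F) (v0, false) s -> ~~ good f F s.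
  move=> s hc; apply/negP => hg; move/negP: hno; apply; apply/existsP.
  by exists s; rewrite hc hg.
have [S [T0 [hdisj hlt]]] := stuck_count vF hv0 hng.
by case: (stuck_false tough hdisj hlt).
Qed.

Lemma main_ind (T : finType) (G : multigraph T) (f : T -> nat) :
  iso_tough G (fun v => f v * (f v + 1)) ->
  forall n F, valid G f F -> defi f F <= n ->
  exists F' : T -> T -> nat, is_ff1_factor G f F'.
Proof.
move=> tough; elim=> [|n IH] F vF hd;
  case: (main_step tough vF) => [h|[F' [vF' hlt]]]; try exact: h.
- lia.
- by apply: (IH F') => //; lia.
Qed.

Theorem mainTheorem12 (T : finType) (G : multigraph T) (f : T -> nat) :
  iso_tough G (fun v => f v * (f v + 1)) ->
  exists F : T -> T -> nat, is_ff1_factor G f F.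
Proof.
move=> tough.
have v0 : valid G f (fun _ _ => 0).
  split => //.
  by move=> v; rewrite /deg big1.
exact: (main_ind tough v0 (leqnn _)).
Qed.
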